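(* Let $E\subseteq\mathbb{R}$ be a measurable weakly nowhere dense set. Then the set $D_L(E)$ of points of $E$ which are left density points of $E$ is of first category in $E$ (with the subspace topology), and likewise the set $D_R(E)$ of points of $E$ which are right density points of $E$ is of first category in $E$.
   Context: $|A|$ denotes Lebesgue measure. A set $E\subseteq\mathbb{R}$ is weakly nowhere dense if for every (nondegenerate) interval $J$ the set $E\cap J$ does not have full measure in $J$, i.e. $|J\setminus E|>0$. A point $x$ is a left (resp. right) density point of $E$ if for every sequence of intervals $I_n=[x-r_n,x]$ (resp. $I_n=[x,x+r_n]$) with $r_n\searrow0$ we have $|E\cap I_n|/|I_n|\to1$. *)

(* Defs.v *)
From mathcomp Require Import all_boot all_algebra all_classical all_reals all_analysis.
Import numFieldNormedType.Exports.
Set Implicit Arguments. Unset Strict Implicit. Unset Printing Implicit Defensive.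
Import GRing.Theory Num.Theory.
Local Open Scope classical_set_scope.
Local Open Scope ring_scope.

(* Lebesgue measurable sets: Caratheodory-measurable sets of the Lebesgue
   outer measure (= the completed Lebesgue sigma-algebra). *)
Definition lebesgue_measurable {R : realType} (E : set R) : Prop :=
  ((wlength (R:=R) idfun)^*%mu).-cara.-measurable E.

Notation leb := (@completed_lebesgue_measure _).

Definition weakly_nowhere_dense {R : realType} (E : set R) : Prop :=
  forall a b : R, a < b -> (0 < leb (`[a, b] `\` E))%E.

Definition left_density_point {R : realType} (E : set R) (x : R) : Prop :=
  forall r : R^nat, (forall n, 0 < r n) -> {homo r : n m / (n <= m)%N >-> m <= n} ->
    r @ \oo --> (0 : R) ->
    (fun n => fine (leb (E `&` `[x - r n, x])) / r n) @ \oo --> (1 : R).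

Definition right_density_point {R : realType} (E : set R) (x : R) : Prop :=
  forall r : R^nat, (forall n, 0 < r n) -> {homo r : n m / (n <= m)%N >-> m <= n} ->
    r @ \oo --> (0 : R) ->
    (fun n => fine (leb (E `&` `[x, x + r n])) / r n) @ \oo --> (1 : R).

Definition nowhere_dense {T : topologicalType} (A : set T) : Prop :=
  (closure A)° = set0.

Definition first_category {T : topologicalType} (A : set T) : Prop :=
  exists F : (set T)^nat, (forall n, nowhere_dense (F n)) /\ A = \bigcup_n F n.

Definition DL {R : realType} (E : set R) : set (subspace E) :=
  [set x | E x /\ left_density_point E x].
Definition DR {R : realType} (E : set R) : set (subspace E) :=
  [set x | E x /\ right_density_point E x].
Arguments DL {R} E.
Arguments DR {R} E.

(* Main.v *)
Require Import Defs.
From mathcomp Require Import all_boot all_order all_algebra all_classical all_reals all_analysis.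
From mathcomp.algebra_tactics Require Import ring lra.
Import numFieldNormedType.Exports.
Set Implicit Arguments. Unset Strict Implicit. Unset Printing Implicit Defensive.
Import Order.TTheory GRing.Theory Num.Theory.
Local Open Scope classical_set_scope.
Local Open Scope ring_scope.

Lemma decomp (R : realType) (E : set R) : lebesgue_measurable E ->
  exists A B : set R, [/\ measurable (A : set (measurableTypeR R)), measurable (B : set (measurableTypeR R)),
     lebesgue_measure B = 0%E, E `<=` A `|` B & A `<=` E].
Proof.
rewrite /lebesgue_measurable -completed_caratheodory_measurable g_sigma_completed_algebra_genE.
move=> [A mA [N [B [mB B0 NB]] NE]].
exists A, B; split => //; last by move=> x Ax; rewrite -NE; left.
by rewrite -NE => x [Ax|/NB Bx]; [left|right].
Qed.


Lemma density_small (R : realType) (E : set R) : lebesgue_measurable E ->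
  weakly_nowhere_dense E -> forall a b c : R, a < b -> 0 < c ->
  exists y r, [/\ a < y < b, 0 < r < c &
     (leb (E `&` `[(y - r)%R, (y + r)%R]) <= (r / 10)%:E)%E].
Proof.
move=> mE wE a b c ab c0.
have [A [B [mA mB B0 EAB AE]]] := decomp mE.
pose A' := A `|` B.
have mA' : measurable (A' : set (measurableTypeR R)) := measurableU _ _ mA mB.
have [M [mM M0 MP]] := lebesgue_density mA'.
have [[y [yab [nA'y nMy]]] | nex] := pselect (exists y, a < y < b /\ ~ A' y /\ ~ M y); last first.
  exfalso.
  have ab3 : a + (b-a)/3 < b - (b-a)/3 by lra.
  have := wE _ _ ab3; apply/negP; rewrite -leNgt.
  apply: (@le_trans _ _ (leb (M `|` B))).
    apply: le_outer_measure => x [/= + nEx]; rewrite in_itv /= => /andP[x1 x2].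
    case: (pselect (A' x)) => [[Ax|Bx]|nA'x].
    - by exfalso; apply: nEx; exact: AE.
    - by right.
    - left; apply: contrapT => nMx; apply: nex; exists x; split => //.
      by apply/andP; split; lra.
  rewrite (_ : leb (M `|` B) = lebesgue_measure (M `|` B)) //.
  apply: (le_trans (measureU2 _ mM mB)).
  have EE : forall X, lebesgue_measure_lebesgue_measure__canonical__measure_function_Content R X = lebesgue_measure X by [].
  by rewrite !EE M0 B0 adde0.

have PY : ~ ~ ((lebesgue_measure (A' `&` ball y r) / lebesgue_measure (ball y r))%E @[r --> 0^'+] --> (\1_A' y)%:E).
  by move=> H; apply: nMy; apply: MP.
move/contrapT: PY; rewrite indicE memNset // => PY.
move/fine_cvgP: PY => [Pfin Pcv].
have H : \forall r \near 0^'+, (0 < r /\ r < c) /\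
   ((lebesgue_measure (A' `&` ball y r) / lebesgue_measure (ball y r))%E <= (1/40)%:E)%E.
  near=> r; split; [split|].
  - by near: r; exact: nbhs_right_gt.
  - by near: r; exact: nbhs_right_lt.
  - near: r; have l40 : (0:R) < 1/40 by lra.
    apply: filterS2 Pfin (@cvgr_lt _ _ _ _ _ _ Pcv _ l40) => r fr lr.
    by rewrite -(fineK fr) lee_fin ltW.
have [r [[r0 rc] Hr]] := filter_ex H.
exists y, (r/2); split => //; first by apply/andP; split; lra.
apply: (@le_trans _ _ (lebesgue_measure (A' `&` ball y r))).
  apply: le_outer_measure => x [Ex]; rewrite /= in_itv /= => /andP[x1 x2].
  split; first by apply: EAB.
  by rewrite /ball /= ltr_distlC; apply/andP; split; lra.
move: Hr; rewrite (lebesgue_measure_ball _ (ltW r0)) inver.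
have -> : (r *+ 2 == 0) = false by apply/negbTE; rewrite mulrn_eq0 /= gt_eqF.
rewrite lee_pdivrMr; last by rewrite mulrn_wgt0.
move/le_trans; apply; rewrite -EFinM lee_fin; lra.
Unshelve. all: by end_near. Qed.

Lemma leb_itv (R : realType) (a b : R) : a <= b -> leb `[a, b] = (b - a)%:E.
Proof.
move=> ab; rewrite (_ : leb `[a, b] = lebesgue_measure `[a, b]) //.
rewrite lebesgue_measure_itv /= lte_fin.
have [_|ba] := ltP a b; first by rewrite EFinB.
have -> : b = a by apply/eqP; rewrite eq_le ab ba.
by rewrite subrr.
Qed.

Lemma key_left (R : realType) (E S : set R) (c x0 eps : R) :
  lebesgue_measurable E -> weakly_nowhere_dense E -> 0 < c -> 0 < eps -> E x0 ->
  (forall s, S s -> forall h, 0 < h < c -> ((h/2)%:E <= leb (E `&` `[(s - h)%R, s]))%E) ->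
  (forall z, E z -> `|z - x0| < eps -> forall eta, 0 < eta -> exists s, S s /\ `|s - z| < eta) ->
  False.
Proof.
move=> mE wE c0 eps0 Ex0 PS appr.
have [y [h1 [/andP[y1 y2] /andP[h10 h1c] Hy]]] := density_small mE wE (a := x0 - eps) (b := x0) (c := c) ltac:(lra) c0.
have [s0 [Ss0 ds0]] : exists s, S s /\ `|s - x0| < x0 - y.
  by apply: appr => //; rewrite ?subrr ?normr0 //; lra.
move: ds0; rewrite ltr_distlC => /andP[s01 s02].
pose T := [set s | S s /\ y <= s].
have Ts0 : T s0 by split => //; lra.
have hlb : has_lbound T by exists y => s [].
pose b := inf T.
have yb : y <= b by apply: lb_le_inf; [exists s0 | move=> s []].
have bs0 : b <= s0 by apply: ge_inf.
have gap : forall z, E z -> y < z -> z < b -> False.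
  move=> z Ez zy zb.
  have [s [Ss]] : exists s, S s /\ `|s - z| < Num.min (z - y) (b - z).
    apply: appr => //; last by rewrite lt_min; apply/andP; split; lra.
    by rewrite ltr_distlC; apply/andP; split; lra.
  rewrite lt_min => /andP[]; rewrite !ltr_distlC => /andP[d1 d2] /andP[d3 d4].
  have : b <= s by apply: ge_inf => //; split => //; lra.
  lra.
have Tn : T !=set0 by exists s0.
have [bh|bh] := lerP (b - y) (h1/4).
  have [s [Ss ys] sb] := inf_lt Tn (x := b + h1/4) ltac:(lra).
  have H1 := PS s Ss h1 ltac:(lra).
  have H2 : (leb (E `&` `[(s - h1)%R, s]) <= leb (E `&` `[(y - h1)%R, (y + h1)%R]))%E.
    apply: le_outer_measure => x [Ex]; rewrite /= !in_itv /= => /andP[x1 x2].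
    by split => //; apply/andP; split; lra.
  have := le_trans H1 (le_trans H2 Hy); rewrite lee_fin; lra.
have [s [Ss ys] sb] := inf_lt Tn (x := b + h1/16) ltac:(lra).
have bs : b <= s by apply: ge_inf.
have := PS s Ss (h1/4) ltac:(lra).
have : (leb (E `&` `[(s - h1/4)%R, s]) <= leb `[b, (b + h1/16)%R])%E.
  apply: le_outer_measure => x [Ex]; rewrite /= !in_itv /= => /andP[x1 x2].
  apply/andP; split; last lra.
  rewrite leNgt; apply/negP => xb; apply: (gap x Ex) => //; lra.
rewrite leb_itv; last lra.
move=> H1 H2; have := le_trans H2 H1; rewrite lee_fin; lra.
Qed.

Lemma key_right (R : realType) (E S : set R) (c x0 eps : R) :
  lebesgue_measurable E -> weakly_nowhere_dense E -> 0 < c -> 0 < eps -> E x0 ->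
  (forall s, S s -> forall h, 0 < h < c -> ((h/2)%:E <= leb (E `&` `[s, (s + h)%R]))%E) ->
  (forall z, E z -> `|z - x0| < eps -> forall eta, 0 < eta -> exists s, S s /\ `|s - z| < eta) ->
  False.
Proof.
move=> mE wE c0 eps0 Ex0 PS appr.
have [y [h1 [/andP[y1 y2] /andP[h10 h1c] Hy]]] := density_small mE wE (a := x0) (b := x0 + eps) (c := c) ltac:(lra) c0.
have [s0 [Ss0 ds0]] : exists s, S s /\ `|s - x0| < y - x0.
  by apply: appr => //; rewrite ?subrr ?normr0 //; lra.
move: ds0; rewrite ltr_distlC => /andP[s01 s02].
pose T := [set s | S s /\ s <= y].
have Ts0 : T s0 by split => //; lra.
have hub : has_ubound T by exists y => s [].
pose b := sup T.
have Tn : T !=set0 by exists s0.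
have yb : b <= y by apply: ge_sup => // s [].
have bs0 : s0 <= b by apply: ub_le_sup.
have gap : forall z, E z -> b < z -> z < y -> False.
  move=> z Ez zb zy.
  have [s [Ss]] : exists s, S s /\ `|s - z| < Num.min (y - z) (z - b).
    apply: appr => //; last by rewrite lt_min; apply/andP; split; lra.
    by rewrite ltr_distlC; apply/andP; split; lra.
  rewrite lt_min => /andP[]; rewrite !ltr_distlC => /andP[d1 d2] /andP[d3 d4].
  have : s <= b by apply: ub_le_sup => //; split => //; lra.
  lra.
have [bh|bh] := lerP (y - b) (h1/4).
  have [s [Ss ys] sb] : exists2 s, T s & b - h1/4 < s.
    by apply: sup_gt => //; rewrite -/b; lra.
  have H1 := PS s Ss h1 ltac:(lra).
  have H2 : (leb (E `&` `[s, (s + h1)%R]) <= leb (E `&` `[(y - h1)%R, (y + h1)%R]))%E.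
    apply: le_outer_measure => x [Ex]; rewrite /= !in_itv /= => /andP[x1 x2].
    by split => //; apply/andP; split; lra.
  have := le_trans H1 (le_trans H2 Hy); rewrite lee_fin; lra.
have [s [Ss ys] sb] : exists2 s, T s & b - h1/16 < s.
  by apply: sup_gt => //; rewrite -/b; lra.
have bs : s <= b by apply: ub_le_sup.
have := PS s Ss (h1/4) ltac:(lra).
have : (leb (E `&` `[s, (s + h1/4)%R]) <= leb `[(b - h1/16)%R, b])%E.
  apply: le_outer_measure => x [Ex]; rewrite /= !in_itv /= => /andP[x1 x2].
  apply/andP; split; first lra.
  rewrite leNgt; apply/negP => xb; apply: (gap x Ex) => //; lra.
rewrite leb_itv; last lra.
move=> H1 H2; have := le_trans H2 H1; rewrite lee_fin; lra.
Qed.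
Lemma small_inv (R : realType) (e : R) : 0 < e -> exists n : nat, (n.+1%:R)^-1 < e.
Proof.
move=> e0; exists (Num.Def.trunc e^-1).
have := truncnS_gt e^-1; set m := (_.+1)%:R => hm.
have m0 : 0 < m by rewrite /m ltr0n.
rewrite -(invrK e) ltf_pV2 // ?posrE ?invr_gt0 //.
Qed.

Lemma bad_seq (R : realType) (f : R -> \bar R) :
  (forall r : R^nat, (forall n, 0 < r n) -> {homo r : n m / (n <= m)%N >-> m <= n} ->
    r @ \oo --> (0 : R) -> (fun n => fine (f (r n)) / r n) @ \oo --> (1 : R)) ->
  (forall h, 0 < h -> (0 <= f h)%E) ->
  exists n : nat, forall h, 0 < h < (n.+1%:R)^-1 -> ((h / 2)%:E <= f h)%E.
Proof.
move=> Hd f0; apply: contrapT => nex.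
have bad : forall e : R, exists h : R, 0 < e -> (0 < h < e /\ (f h < (h/2)%:E)%E).
  move=> e; have [e0|ne0] := pselect (0 < e); last by exists 0 => /ne0.
  have [n hn] := small_inv e0.
  have : ~ (forall h, 0 < h < (n.+1%:R)^-1 -> ((h / 2)%:E <= f h)%E) by move=> H; apply: nex; exists n.
  move=> /existsNP [h] /not_implyP [/andP[h0 h1]] /negP; rewrite -ltNge => fh.
  by exists h => _; split => //; apply/andP; split => //; apply: lt_trans hn.
have [G HG] := choice bad.
pose r := fix r n := if n is m.+1 then G (Num.min (r m) (m.+2%:R^-1)) else G 1.
have Hr : forall n, [/\ 0 < r n, r n < (n.+1%:R)^-1 & (f (r n) < (r n / 2)%:E)%E].
  elim => [|m [rm0 rm1 rm2]] /=.
    by have [/andP[h0 h1] h2] := HG 1 ltr01; split => //; rewrite invr1.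
  have e0 : 0 < Num.min (r m) (m.+2%:R^-1) by rewrite lt_min rm0 invr_gt0 ltr0n.
  have [/andP[h0 h1] h2] := HG _ e0; split => //.
  by apply: (lt_le_trans h1); rewrite ge_min lexx orbT.
have rdec : forall m, r m.+1 <= r m.
  move=> m /=; have [rm0 _ _] := Hr m.
  have e0 : 0 < Num.min (r m) (m.+2%:R^-1) by rewrite lt_min rm0 invr_gt0 ltr0n.
  have [/andP[h0 h1] h2] := HG _ e0.
  by apply/ltW/(lt_le_trans h1); rewrite ge_min lexx.
have rhomo : {homo r : n m / (n <= m)%N >-> m <= n}.
  move=> n m /subnKC <-; elim: (m - n)%N => [|k IH]; first by rewrite addn0.
  by rewrite addnS; apply: le_trans IH; apply: rdec.
have rcvg : r @ \oo --> (0 : R).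
  apply/cvgrPdist_lt => e e0.
  have [N hN] := small_inv e0.
  exists N => // n /= Nn; rewrite sub0r normrN.
  have [rn0 rn1 _] := Hr n; rewrite gtr0_norm //; apply: (lt_trans rn1).
  apply: le_lt_trans hN; rewrite lef_pV2 ?posrE ?ltr0n // ler_nat.
  exact: Nn.
have := Hd r (fun n => let: And3 a _ _ := Hr n in a) rhomo rcvg.
move=> /cvgr_gt /(_ (1/2) ltac:(lra)) => H.
have [n Hn] := filter_ex H.
have [rn0 _ rn2] := Hr n.
have fin : f (r n) \is a fin_num.
  by rewrite ge0_fin_numE ?f0 // (lt_trans rn2) ?ltry.
move: Hn; rewrite ltr_pdivlMr // => Hn.
rewrite -(fineK fin) lte_fin in rn2; lra.
Qed.

Lemma nowhere_dense_crit (R : realType) (E : set R) (F : set (subspace E)) :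
  (forall x, F x -> E x) ->
  (forall x0 eps : R, E x0 -> 0 < eps ->
    (forall z, E z -> `|z - x0| < eps -> forall eta, 0 < eta -> exists s, F s /\ `|s - z| < eta) -> False) ->
  nowhere_dense F.
Proof.
move=> FE H; rewrite /nowhere_dense; apply/seteqP; split => // x0 Hx; exfalso.
have [Ex0|nEx0] := pselect (E x0).
  move: Hx; rewrite /interior /=; case: (@nbhs_subspaceP _ E x0) => // _.
  rewrite /within /=.
  move=> /nbhs_ballP [eps /= eps0 Heps].
  apply: (H x0 eps Ex0 eps0) => z Ez zx eta eta0.
  have cz : closure F z.
    apply: Heps => //; rewrite /ball /= distrC //.
  have : nbhs (z : subspace E) (ball z eta).
    case: (@nbhs_subspaceP _ E z) => // _; rewrite /within /=.
    by apply/nbhs_ballP; exists eta => //= w bw _.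
  move=> /cz [s [Fs bs]]; exists s; split => //.
  by move: bs; rewrite /ball /= distrC.
have : closure F x0 by apply: nbhs_singleton.
have : nbhs (x0 : subspace E) [set x0].
  by case: (@nbhs_subspaceP _ E x0) => // _.
move=> N1 C1; have [s [Fs sx]] := C1 _ N1.
by apply: nEx0; rewrite -sx; apply: FE.
Qed.

Theorem theorem3p4 (R : realType) (E : set R) :
  lebesgue_measurable E -> weakly_nowhere_dense E ->
  first_category (DL E) /\ first_category (DR E).
Proof.
move=> mE wE; split.
- pose P n s := forall h, 0 < h < (n.+1%:R)^-1 -> ((h / 2)%:E <= leb (E `&` `[(s - h)%R, s]))%E.
  exists (fun n => DL E `&` P n); split.
    move=> n; apply: nowhere_dense_crit; first by move=> x [[]].
    move=> x0 eps Ex0 eps0 appr.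
    apply: (@key_left R E (DL E `&` P n) (n.+1%:R)^-1 x0 eps mE wE _ eps0 Ex0) => //.
    by move=> s [_ Ps].
  apply/seteqP; split => [x Dx|x [n _ [Dx _]] //].
  have [n Hn] : exists n, P n x.
    apply: bad_seq; first by case: Dx.
    by move=> h _; apply: outer_measure_ge0.
  by exists n.
- pose P n s := forall h, 0 < h < (n.+1%:R)^-1 -> ((h / 2)%:E <= leb (E `&` `[s, (s + h)%R]))%E.
  exists (fun n => DR E `&` P n); split.
    move=> n; apply: nowhere_dense_crit; first by move=> x [[]].
    move=> x0 eps Ex0 eps0 appr.
    apply: (@key_right R E (DR E `&` P n) (n.+1%:R)^-1 x0 eps mE wE _ eps0 Ex0) => //.
    by move=> s [_ Ps].
  apply/seteqP; split => [x Dx|x [n _ [Dx _]] //].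
  have [n Hn] : exists n, P n x.
    apply: bad_seq; first by case: Dx.
    by move=> h _; apply: outer_measure_ge0.
  by exists n.
Qed.
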